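(* Let $G$, $\mathrm{b}$, $(w_{ij})$, the messages $m_{j\to i}(t)$ of Sync-BP, and the quantities $n_{j\to i}(t)$ be as in the context. Then for every edge $\{i,j\}$ of $G$ and every $t=0,1,2,\dots$, $n_{j\to i}(t)=m_{j\to i}(t)$.
   Context: Let $G=(V,E)$ be a finite undirected simple graph, $V=\{1,\dots,n\}$, with real edge weights $w_{ij}$ and positive integers $b_1,\dots,b_n$ with $\deg_G(i)\ge b_i+1$ for all $i$; $N(i)$ is the neighbour set of $i$. Sync-BP messages: $m_{i\to j}(0)=w_{ij}$ and for $t\ge1$, $m_{i\to j}(t)=w_{ij}-\big(b_i\text{-th smallest of }\{m_{\ell\to i}(t-1):\ell\in N(i)\setminus\{j\}\}\big)$, for each ordered pair with $\{i,j\}\in E$. Computation tree: for $i\in V$ and $t\ge0$, $T_i^t$ is the rooted labelled tree with levels $0,1,\dots,t+1$ defined by: the root (level 0) has label $i$; the root has $\deg_G(i)$ children whose labels are exactly the elements of $N(i)$; a node at level $1\le k\le t$ with label $s$ whose parent has label $r$ has children whose labels are exactly the elements of $N(s)\setminus\{r\}$; nodes at level $t+1$ are leaves. An edge between nodes labelled $a,c$ has weight $w_{ac}$. For a child $i_j$ of the root, $T^t_{i_j\to i}$ denotes the subtree consisting of the root edge $(i,i_j)$ together with $i_j$ and all its descendants. A perfect tree-$\mathrm{b}$-matching of such a tree is a set of its edges such that each non-leaf node with label $s$ (other than the root $i$ in the case of $T^t_{i_j\to i}$) is incident to exactly $b_s$ edges of the set. Let $W^+_{i_j\to i}(t)$ (resp.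 $W^-_{i_j\to i}(t)$) be the minimum weight of a perfect tree-$\mathrm{b}$-matching of $T^t_{i_j\to i}$ that contains (resp. does not contain) the root edge $(i,i_j)$, and $n_{i_j\to i}(t)=W^+_{i_j\to i}(t)-W^-_{i_j\to i}(t)$; this is well-defined for every edge $\{i,j\}$ of $G$ via $n_{j\to i}(t)$. *)

(* Defs.v *)
From HB Require Import structures.
From mathcomp Require Import all_boot all_order all_algebra.
Set Implicit Arguments. Unset Strict Implicit. Unset Printing Implicit Defensive.
Import Order.TTheory GRing.Theory Num.Theory.
Local Open Scope ring_scope.

Section SyncBP.
Variables (R : realFieldType) (T : finType) (e : rel T)
          (w : T -> T -> R) (b : T -> nat).

Definition deg (i : T) : nat := #|[pred l | e i l]|.

Definition kth_smallest (k : nat) (s : seq R) : R :=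
  nth 0 (sort <=%R s) k.-1.

(* Sync-BP messages: msg t i j = m_{i -> j}(t) *)
Fixpoint msg (t : nat) : T -> T -> R := fun i j =>
  match t with
  | 0 => w i j
  | t'.+1 => w i j -
      kth_smallest (b i) [seq msg t' l i | l <- enum T & e i l && (l != j)]
  end.

(* A node is encoded by the REVERSED sequence of labels
   on the path from the root to it: [:: x_k; x_(k-1); ...; x_0] with x_0 the
   root label.  Its label is the head, its parent's label the second item.
   Every non-root node is identified with the tree edge to its parent. *)
Definition children (r s : T) : seq T := [seq c <- enum T | e s c && (c != r)].

Definition child_nodes (p : seq T) : seq (seq T) :=
  if p is s :: r :: _ then [seq c :: p | c <- children r s] else [::].

Fixpoint below (k : nat) (p : seq T) : seq (seq T) :=
  match k with
  | 0 => [::]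
  | k'.+1 => flatten [seq q :: below k' q | q <- child_nodes p]
  end.

(* the edges (= non-root nodes) of T^t_{j -> i}: the root edge (i,j)
   (node [:: j; i], at level 1) and all nodes below it down to level t+1 *)
Definition subtree_edges (t : nat) (i j : T) : seq (seq T) :=
  [:: j; i] :: below t [:: j; i].

Definition edge_weight (p : seq T) : R :=
  if p is a :: c :: _ then w c a else 0.

(* a set of edges of the tree is represented by its indicator M *)
Definition tree_weight (t : nat) (i j : T) (M : seq T -> bool) : R :=
  \sum_(p <- subtree_edges t i j | M p) edge_weight p.

(* perfect tree-b-matching of T^t_{j -> i}: every non-leaf node other than
   the root i (i.e. every node at level 1..t, i.e. of path length <= t+1)
   with label s is incident to exactly b s edges of M (edge to its parent
   plus edges to its children). *)
Definition perfect_tree_bmatching (t : nat) (i j : T) (M : seq T -> bool) :=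
  forall p, p \in subtree_edges t i j -> (size p <= t.+1)%N ->
    (M p + count M (child_nodes p))%N = b (head j p).

Definition is_min_value (P : (seq T -> bool) -> Prop) (f : (seq T -> bool) -> R)
  (x : R) : Prop :=
  (exists M, P M /\ f M = x) /\ (forall M, P M -> x <= f M).

Definition is_Wplus (t : nat) (i j : T) (x : R) : Prop :=
  is_min_value (fun M => perfect_tree_bmatching t i j M /\ M [:: j; i])
               (tree_weight t i j) x.

Definition is_Wminus (t : nat) (i j : T) (x : R) : Prop :=
  is_min_value (fun M => perfect_tree_bmatching t i j M /\ ~~ M [:: j; i])
               (tree_weight t i j) x.

End SyncBP.

(* Main.v *)
Require Import Defs.
From HB Require Import structures.
From mathcomp Require Import all_boot all_order all_algebra.
From mathcomp Require Import zify ring.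
From Stdlib Require Import ClassicalEpsilon.
Import Order.TTheory GRing.Theory Num.Theory.
Local Open Scope ring_scope.

Section Comb.
Variable R : realFieldType.

Definition ssum (s : seq R) : R := \sum_(z <- s) z.
End Comb.
Arguments ssum {R}.
Section Comb1.
Variable R : realFieldType.

Lemma ssum_cons (x : R) s : ssum (x :: s) = x + ssum s.
Proof. by rewrite /ssum big_cons. Qed.

Lemma ssum_rcons (s : seq R) x : ssum (rcons s x) = ssum s + x.
Proof. by rewrite -cats1 /ssum big_cat big_seq1. Qed.

Lemma take_sorted_le (x : R) t m : sorted <=%R (x :: t) -> (m <= size t)%N ->
  ssum (take m (x :: t)) <= ssum (take m t).
Proof.
elim: t x m => [|y t IH] x [|m] //=.
move=> /andP[xy syt] hm.
have h := IH y m syt hm.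
by rewrite !ssum_cons; apply: lerD.
Qed.

Lemma sub_multiset_sum (t : seq R) : sorted <=%R t -> forall u v : seq R,
  perm_eq t (u ++ v) -> ssum (take (size u) t) <= ssum u.
Proof.
elim: t => [|x t IH] st u v hp.
  have := perm_size hp; rewrite size_cat /=.
  by case: u hp => //= _ _; rewrite /ssum big_nil.
have st' : sorted <=%R t by move: st => /= /path_sorted.
case xu: (x \in u).
  have pu := perm_to_rem xu.
  have hp2 : perm_eq t (rem x u ++ v).
    rewrite -(perm_cons x); apply: (perm_trans hp).
    by rewrite -cat_cons perm_cat2r.
  have -> : ssum u = x + ssum (rem x u) by rewrite /ssum (perm_big _ pu) big_cons.
  rewrite (perm_size pu) /= ssum_cons.
  by rewrite lerD2l; apply: IH hp2.
have xv : x \in v.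
  have : x \in u ++ v by rewrite -(perm_mem hp) mem_head.
  by rewrite mem_cat xu.
have pv := perm_to_rem xv.
have hp2 : perm_eq t (u ++ rem x v).
  rewrite -(perm_cons x); apply: (perm_trans hp).
  apply: (@perm_trans _ (u ++ x :: rem x v)); first by rewrite perm_cat2l.
  by rewrite -cat1s perm_catCA.
apply: le_trans (IH st' u _ hp2).
apply: take_sorted_le => //.
by rewrite (perm_size hp2) size_cat leq_addr.
Qed.

End Comb1.


Section Comb2.
Variables (R : realFieldType) (T : eqType).

Lemma lemA (xs : seq T) (g : T -> R) (sel : pred T) :
  ssum (take (count sel xs) (sort <=%R (map g xs))) <= \sum_(x <- xs | sel x) g x.
Proof.
have -> : \sum_(x <- xs | sel x) g x = ssum (map g (filter sel xs)).
  by rewrite /ssum big_map big_filter.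
rewrite -size_filter -(size_map g).
apply: (@sub_multiset_sum R _ _ _ (map g (filter (predC sel) xs))).
  by apply: sort_sorted; exact: le_total.
rewrite perm_sort -map_cat perm_map // perm_sym perm_filterC //.
Qed.

Lemma lemB (xs : seq T) (g : T -> R) (m : nat) : uniq xs -> (m <= size xs)%N ->
  let ys := take m (sort (relpre g <=%R) xs) in
  count (mem ys) xs = m /\
  \sum_(x <- xs | x \in ys) g x = ssum (take m (sort <=%R (map g xs))).
Proof.
move=> uxs hm ys.
have pf : perm_eq (filter (mem ys) xs) ys.
  apply: uniq_perm; first by rewrite filter_uniq.
    by rewrite take_uniq // sort_uniq.
  move=> x; rewrite mem_filter; apply/andP/idP => [[]//|h]; split=> //.
  by rewrite -(mem_sort (relpre g <=%R)); apply: mem_take h.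
split.
  by rewrite -size_filter (perm_size pf) size_take size_sort; case: ltngtP hm.
rewrite -big_filter (perm_big _ pf) /ssum sort_map -map_take big_map //.
Qed.

End Comb2.


Section Tree.
Variables (R : realFieldType) (T : finType) (e : rel T)
          (w : T -> T -> R) (b : T -> nat).

Definition bl (p : seq T) : nat := if p is s :: _ then b s else 0%N.

Fixpoint Pk (k : nat) (p : seq T) (M : seq T -> bool) : Prop :=
  match k with
  | 0 => True
  | k'.+1 => (M p + count M (child_nodes e p))%N = bl p /\
             forall q, q \in child_nodes e p -> Pk k' q M
  end.

Fixpoint fk (k : nat) (p : seq T) (M : seq T -> bool) : R :=
  (if M p then edge_weight w p else 0) +
  match k with
  | 0 => 0
  | k'.+1 => \sum_(q <- child_nodes e p) fk k' q M
  end.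

Definition L k p : seq (seq T) := p :: below e k p.

Lemma child_form p q : q \in child_nodes e p -> exists c, q = c :: p.
Proof.
case: p => [|s [|r p]] //= /mapP[c _ ->]; by exists c.
Qed.

Arguments child_form {p q}.

Lemma mem_LS k p r : (r \in L k.+1 p) =
  (r == p) || has (fun q => r \in L k q) (child_nodes e p).
Proof.
rewrite /L in_cons; congr (_ || _); apply/flattenP/hasP.
  by case=> s /mapP[q qin ->] rin; exists q.
by case=> q qin rin; exists (q :: below e k q) => //; apply: map_f.
Qed.

Lemma L_self k p : p \in L k p.
Proof. by rewrite /L mem_head. Qed.

Lemma L_sub k p q r : q \in child_nodes e p -> r \in L k q -> r \in L k.+1 p.
Proof. by move=> qin rin; rewrite mem_LS; apply/orP; right; apply/hasP; exists q. Qed.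

Arguments L_sub {k p q r}.

Lemma L_suffix k p r : r \in L k p -> exists s, r = s ++ p.
Proof.
elim: k p r => [|k IH] p r.
  by rewrite /L /= inE => /eqP ->; exists [::].
rewrite mem_LS => /orP[/eqP ->|/hasP[q qin rin]]; first by exists [::].
have [s ->] := IH _ _ rin; have [c ->] := child_form qin.
by exists (rcons s c); rewrite cat_rcons.
Qed.

Lemma agree k p M M' : {in L k p, M =1 M'} ->
  (Pk k p M <-> Pk k p M') /\ fk k p M = fk k p M'.
Proof.
elim: k p => [|k IH] p hM.
  by split => //=; rewrite hM // L_self.
have hq q : q \in child_nodes e p -> {in L k q, M =1 M'}.
  by move=> qin r rin; apply: hM; apply: L_sub qin rin.
have hc : count M (child_nodes e p) = count M' (child_nodes e p).
  apply: eq_in_count => q qin; apply: hM; apply: L_sub qin (L_self _ _).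
split.
  rewrite /= hM ?L_self // hc; split=> [][h1 h2]; split=> // q qin.
    by apply/(IH q (hq q qin)).1; apply: h2.
  by apply/(IH q (hq q qin)).1; apply: h2.
rewrite /= hM ?L_self //; congr (_ + _).
by apply: eq_big_seq => q qin; apply: (IH q (hq q qin)).2.
Qed.

Lemma tw k p M : \sum_(r <- L k p | M r) edge_weight w r = fk k p M.
Proof.
elim: k p => [|k IH] p.
  by rewrite /L /= big_cons big_nil; case: (M p); rewrite ?addr0.
rewrite /L big_cons.
have -> : \sum_(r <- below e k.+1 p | M r) edge_weight w r =
          \sum_(q <- child_nodes e p) fk k q M.
  by rewrite /= big_flatten /= big_map; apply: eq_bigr => q _; apply: IH.
by rewrite /=; case: (M p); rewrite ?add0r.
Qed.

Lemma ptb k p (M : seq T -> bool) (d : T) : p != [::] ->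
  (forall r, r \in L k p -> (size r < size p + k)%N ->
     (M r + count M (child_nodes e r))%N = b (head d r)) <-> Pk k p M.
Proof.
elim: k p => [|k IH] p pn0.
  by split => // _ r /L_suffix[s ->]; rewrite size_cat addn0 ltnNge leq_addl.
have hb : b (head d p) = bl p by case: p pn0.
split.
  move=> H; split; first by rewrite -hb; apply: H; rewrite ?L_self // addnS ltnS leq_addr.
  move=> q qin; have [c qe] := child_form qin.
  apply/(IH q); first by rewrite qe.
  move=> r rin hs; apply: H; first by apply: L_sub qin rin.
  by move: hs; rewrite qe /= addSnnS.
move=> [H1 H2] r; rewrite mem_LS => /orP[/eqP ->|/hasP[q qin rin]] hs.
  by rewrite hb.
have [c qe] := child_form qin.
have := (IH q _).2 (H2 q qin) r rin; apply; first by rewrite qe.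
by move: hs; rewrite qe /= addSnnS.
Qed.

End Tree.


Lemma choice_ax (A B : Type) (P : A -> B -> Prop) :
  (forall a, exists b, P a b) -> exists f, forall a, P a (f a).
Proof.
move=> H; exists (fun a => proj1_sig (constructive_indefinite_description _ (H a))).
move=> a; exact: proj2_sig (constructive_indefinite_description _ (H a)).
Qed.

Arguments choice_ax {A B P}.
Arguments agree {R T e w b k p M M'} _.
Arguments Pk {T}. Arguments fk {R T}. Arguments L {T}.
Arguments L_suffix {T e k p r}. Arguments L_self {T} e k p.
Arguments lemB {R T xs} g {m}.

Section Main.
Variables (R : realFieldType) (T : finType) (e : rel T)
          (w : T -> T -> R) (b : T -> nat).
Hypotheses (e_sym : symmetric e) (w_sym : forall i j, w i j = w j i)
  (b_pos : forall i, (0 < b i)%N) (deg_ge : forall i, (b i < deg e i)%N).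

Lemma size_children c a : e c a -> size (children e c a) = (deg e a).-1.
Proof.
move=> eca.
have -> : deg e a = size (filter (e a) (enum T)).
  rewrite /deg cardE /enum_mem -enumT /= -filter_predI; congr size.
  by apply: eq_filter => x; rewrite /= andbT.
have cin : c \in filter (e a) (enum T) by rewrite mem_filter e_sym eca mem_enum.
rewrite -(size_rem cin) rem_filter; last by rewrite filter_uniq // enum_uniq.
rewrite -filter_predI; congr size; apply: eq_filter => x /=; by rewrite andbC.
Qed.

Lemma sum_split (xs : seq T) (Wf : T -> bool -> R) (g : T -> R) (sel : pred T) :
  {in xs, forall x, g x = Wf x true - Wf x false} ->
  \sum_(x <- xs) Wf x (sel x) =
  \sum_(x <- xs) Wf x false + \sum_(x <- xs | sel x) g x.
Proof.
move=> hg; rewrite [X in _ + X]big_mkcond -big_split; apply: eq_big_seq => x xin /=.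
by case: (sel x); rewrite ?addr0 // (hg x xin) addrCA subrr addr0.
Qed.

Lemma main k : forall a c rest, e c a -> exists W : bool -> R,
  (forall top, is_min_value
     (fun M => Pk e b k (a :: c :: rest) M /\ M (a :: c :: rest) = top)
     (fk e w k (a :: c :: rest)) (W top)) /\
  W true - W false = msg e w b k a c.
Proof.
elim: k => [|k IH] a c rest eca.
  exists (fun top : bool => if top then w c a else 0); split.
    move=> top; split.
      by exists (fun _ => top); split => //=; case: top; rewrite addr0.
    by move=> M [_ <-] /=; rewrite addr0.
  by rewrite /= subr0 w_sym.
set p := a :: c :: rest.
set xs := children e c a.
have IH' : forall x, exists WM : (bool -> R) * (bool -> seq T -> bool), e a x ->
   (forall top, [/\ Pk e b k (x :: p) (WM.2 top), WM.2 top (x :: p) = top,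
      fk e w k (x :: p) (WM.2 top) = WM.1 top &
      forall M, Pk e b k (x :: p) M -> M (x :: p) = top -> WM.1 top <= fk e w k (x :: p) M])
   /\ WM.1 true - WM.1 false = msg e w b k x a.
  move=> x; case: (boolP (e a x)) => hx; last by exists (fun _ => 0, fun _ _ => true).
  have [W [HW HD]] := IH x a (c :: rest) hx.
  have HM : forall top, exists M, [/\ Pk e b k (x :: p) M, M (x :: p) = top &
                               fk e w k (x :: p) M = W top].
    by move=> top; case: (HW top) => [[M [[h1 h2] h3]] _]; exists M.
  have [Mf HMf] := choice_ax HM.
  exists (W, Mf) => _; split => // top; have [h1 h2 h3] := HMf top; split => //.
  by move=> M h4 h5; exact: (HW top).2 M (conj h4 h5).
have [WM HWM] := choice_ax IH'.
pose Wf := fun x => (WM x).1.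
pose Mf := fun x => (WM x).2.
pose g := fun x => msg e w b k x a.
have xs_e : forall x, x \in xs -> e a x by move=> x; rewrite mem_filter => /andP[/andP[]].
have hg : {in xs, forall x, g x = Wf x true - Wf x false}.
  by move=> x /xs_e /HWM [_ ->].
have uxs : uniq xs by rewrite filter_uniq ?enum_uniq.
have sz : (b a <= size xs)%N by rewrite size_children //; have := deg_ge a; lia.
pose B := \sum_(x <- xs) Wf x false.
pose ts := sort <=%R (map g xs).
have fkS : forall M, fk e w k.+1 p M =
    (if M p then w c a else 0) + \sum_(x <- xs) fk e w k (x :: p) M.
  by move=> M; rewrite /= big_map.
have key : forall top : bool, is_min_value
   (fun M => Pk e b k.+1 p M /\ M p = top) (fk e w k.+1 p)
   ((if top then w c a else 0) + B + ssum (take (b a - top) ts)).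
  move=> top; pose m := (b a - top)%N.
  have hm : (m <= size xs)%N by apply: leq_trans (leq_subr _ _) sz.
  split.
    pose ys := take m (sort (relpre g <=%R) xs).
    have [hcnt hsum] := lemB g uxs hm.
    pose F := fun x => Mf x (x \in ys).
    pose Mg := fun r : seq T => if r == p then top else F (nth a r (size r - size p).-1) r.
    have agr : forall x, {in L e k (x :: p), Mg =1 F x}.
      move=> x r /L_suffix [s ->]; rewrite /Mg.
      have -> : (s ++ x :: p == p) = false.
        by apply/negbTE/eqP => h; have := congr1 size h; rewrite size_cat /=; lia.
      have -> : (size (s ++ x :: p) - size p).-1 = size s by rewrite size_cat /=; lia.
      by rewrite nth_cat ltnn subnn.
    exists Mg; split; last first.
      rewrite fkS {1}/Mg eqxx.
      have -> : \sum_(x <- xs) fk e w k (x :: p) Mg = \sum_(x <- xs) Wf x (x \in ys).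
        apply: eq_big_seq => x xin; rewrite (agree (b:=b) (agr x)).2.
        have [H _] := HWM x (xs_e x xin); by have [_ _ -> _] := H (x \in ys).
      rewrite -addrA; congr (_ + _).
      apply: (eq_trans (sum_split xs Wf g (fun x => x \in ys) hg)).
      congr (_ + _); exact: hsum.
    split; last by rewrite /Mg eqxx.
    have cnt : count Mg (child_nodes e p) = count (fun x => x \in ys) xs.
      rewrite /child_nodes /= count_map; apply: eq_in_count => x xin /=.
      rewrite (agr x (x :: p) (L_self _ _ _)).
      have [H _] := HWM x (xs_e x xin).
      by have [_ h _ _] := H (x \in ys); exact: h.
    split.
      rewrite cnt hcnt {1}/Mg eqxx /m subnKC //; exact: leq_trans (leq_b1 top) (b_pos a).
    move=> q /mapP [x xin ->]; apply/(agree (w:=w) (agr x)).1.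
    have [H _] := HWM x (xs_e x xin); have [h _ _ _] := H (x \in ys).
    exact: h.
  move=> M [[H1 H2] Htop]; rewrite fkS Htop -!addrA lerD2l.
  apply: (@le_trans _ _ (\sum_(x <- xs) Wf x (M (x :: p)))).
    have := sum_split xs Wf g (fun x => M (x :: p)) hg; rewrite /= => ->.
    rewrite lerD2l.
    have hc : count (fun x => M (x :: p)) xs = m.
      by move: H1; rewrite Htop /= count_map /m => <-; rewrite addKn.
    have := lemA _ _ xs g (fun x => M (x :: p)); rewrite /= hc; exact.
  rewrite big_seq [X in _ <= X]big_seq; apply: ler_sum => x xin.
  have [H _] := HWM x (xs_e x xin); have [_ _ _ Hlow] := H (M (x :: p)).
  apply: Hlow => //; apply: H2; rewrite /child_nodes /=; exact: map_f.
exists (fun top : bool => (if top then w c a else 0) + B + ssum (take (b a - top) ts)).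
split; first exact: key.
have hlt : ((b a).-1 < size ts)%N by rewrite size_sort size_map; have := b_pos a; lia.
have e1 : (b a - true)%N = (b a).-1 by rewrite /= subn1.
have e2 : (b a - false)%N = (b a).-1.+1 by rewrite /= subn0 prednK.
rewrite e1 e2 (take_nth 0 hlt) ssum_rcons.
suff -> : msg e w b k.+1 a c = w c a - nth 0 ts (b a).-1.
  by ring.
by rewrite /= (w_sym a c).
Qed.

End Main.


Lemma min_ext (R : realFieldType) (T : finType) (P P' : (seq T -> bool) -> Prop)
  (f f' : (seq T -> bool) -> R) x :
  is_min_value P f x -> (forall M, P M <-> P' M) -> (forall M, f M = f' M) ->
  is_min_value P' f' x.
Proof.
move=> [[M [h1 h2]] h3] hP hf; split.
  by exists M; split; [apply/hP | rewrite -hf].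
by move=> M' /hP /h3; rewrite hf.
Qed.

Theorem lemma1 (R : realFieldType) (T : finType) (e : rel T)
  (w : T -> T -> R) (b : T -> nat)
  (e_sym : symmetric e) (e_irr : irreflexive e)
  (w_sym : forall i j, w i j = w j i)
  (b_pos : forall i, (0 < b i)%N)
  (deg_ge : forall i, (b i < deg e i)%N) :
  forall (i j : T) (t : nat), e i j ->
    exists Wp Wm : R,
      is_Wplus e w b t i j Wp /\ is_Wminus e w b t i j Wm /\
      Wp - Wm = msg e w b t j i.
Proof.
move=> i j t eij.
have [W [HW HD]] := main R T e w b e_sym w_sym b_pos deg_ge t j i [::] eij.
have hP : forall M, perfect_tree_bmatching e b t i j M <-> Pk e b t [:: j; i] M.
  move=> M; apply: (iff_trans _ (ptb T e b t [:: j; i] M j isT)).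
  by split => H r rin hs; exact: H r rin hs.
have hf : forall M, fk e w t [:: j; i] M = tree_weight e w t i j M.
  by move=> M; rewrite -tw.
exists (W true), (W false); split; [|split]; last exact: HD.
  apply: (min_ext _ _ _ _ _ _ _ (HW true)) => // M.
  by split=> [][h1 h2]; split => //; apply/hP.
apply: (min_ext _ _ _ _ _ _ _ (HW false)) => // M.
split=> [][h1 h2]; split; try by apply/hP.
  by rewrite h2.
by apply/negbTE.
Qed.
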